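(* For all integers $s,l\ge 0$, as $n\to\infty$, \[ \left\langle S_{2,n}^l\left(S_{2,n}-\frac{n}{4}\right)^{2s}\right\rangle\sim\left(\frac{n}{4}\right)^l\frac{(2s-1)!!}{4^{2s}}n^s,\qquad \left\langle S_{2,n}^l\left(S_{2,n}-\frac{n}{4}\right)^{2s+1}\right\rangle\sim\left(\frac{n}{4}\right)^l\frac{(2s+1)!!}{2\cdot 4^{2s+1}}(2l+1)\,n^s. \]
   Context: For $n\ge 1$, let $\Omega_n$ be the set of rooted plane (ordered) full binary trees with $n$ leaves (every internal node has exactly two children, left and right distinguished). The random model is $\Omega_n$ with the uniform probability measure $P_n$; $\langle\cdot\rangle$ denotes expectation with respect to $P_n$. Horton–Strahler ordering: every leaf has order 1; an internal node whose two children have different orders $r_1\neq r_2$ has order $\max\{r_1,r_2\}$; an internal node whose two children both have order $r$ has order $r+1$. A branch of order $r$ is a maximal connected path consisting of nodes all of order $r$. $S_{2,n}(\tau)$ is the number of branches of order $2$ in $\tau\in\Omega_n$. For sequences, $a_n\sim b_n$ means $\lim_{n\to\infty}a_n/b_n=1$. Convention: $(-1)!!=1$. *)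

(* Defs.v *)
From Stdlib Require Import Reals Lra Lia Arith List PeanoNat.
Import ListNotations.
Open Scope R_scope.

Inductive tree : Type := Leaf : tree | Node : tree -> tree -> tree.

Fixpoint leaves (t : tree) : nat :=
  match t with Leaf => 1%nat | Node a b => (leaves a + leaves b)%nat end.

(* Enumeration of Omega_n (fuel-based; fuel n suffices). *)
Fixpoint trees_aux (fuel n : nat) : list tree :=
  match fuel with
  | O => []
  | S f =>
      if Nat.eqb n 1 then [Leaf]
      else flat_map (fun k =>
             flat_map (fun a => map (fun b => Node a b) (trees_aux f (n - k)))
                      (trees_aux f k))
           (seq 1 (n - 1))
  end.

Definition Omega (n : nat) : list tree := trees_aux n n.

Fixpoint hs (t : tree) : nat :=
  match t with
  | Leaf => 1%nat
  | Node a b =>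
      if Nat.eqb (hs a) (hs b) then S (hs a) else Nat.max (hs a) (hs b)
  end.

(* A branch of order r is a maximal connected set (a path) of order-r nodes;
   each branch is identified by its top node: a node of order r which is the
   root or whose parent has order different from r. *)
Definition b2n (b : bool) : nat := if b then 1%nat else 0%nat.

Fixpoint branch_tops (r : nat) (t : tree) : nat :=
  match t with
  | Leaf => 0%nat
  | Node a b =>
      (branch_tops r a + branch_tops r b
       + b2n (Nat.eqb (hs a) r && negb (Nat.eqb (hs t) r))
       + b2n (Nat.eqb (hs b) r && negb (Nat.eqb (hs t) r)))%nat
  end.

Definition S_r (r : nat) (t : tree) : nat :=
  (branch_tops r t + b2n (Nat.eqb (hs t) r))%nat.

Definition S2 (t : tree) : nat := S_r 2 t.

Definition expect (n : nat) (f : tree -> R) : R :=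
  fold_right Rplus 0 (map f (Omega n)) / INR (length (Omega n)).

(* Double factorial, with 0!! = 1!! = 1; (-1)!! = 1 is realised by
   writing (2s-1)!! as dfact (2*s - 1) with truncated subtraction. *)
Fixpoint dfact (n : nat) : nat :=
  match n with
  | O => 1%nat
  | S O => 1%nat
  | S (S m as k) => (n * dfact m)%nat
  end.

Definition asymp (a b : nat -> R) : Prop := Un_cv (fun n => a n / b n) 1.

Lemma leaves_pos t : (1 <= leaves t)%nat.
Proof. induction t; simpl; lia. Qed.

Lemma trees_aux_spec fuel : forall n t, (n <= fuel)%nat ->
  (In t (trees_aux fuel n) <-> leaves t = n).
Proof.
  induction fuel as [|f IH]; intros n t Hn.
  - simpl. split; [tauto|]. intros <-. pose proof (leaves_pos t). lia.
  - simpl. destruct (Nat.eqb_spec n 1) as [->|Hn1].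
    + split.
      * intros [<-|[]]; reflexivity.
      * destruct t as [|a b]; [now left|]. simpl; intros H.
        pose proof (leaves_pos a); pose proof (leaves_pos b); lia.
    + rewrite in_flat_map. split.
      * intros [k [Hk Ht]]. apply in_seq in Hk.
        rewrite in_flat_map in Ht. destruct Ht as [a [Ha Ht]].
        apply in_map_iff in Ht. destruct Ht as [b [<- Hb]].
        apply IH in Ha; [|lia]. apply IH in Hb; [|lia]. simpl; lia.
      * destruct t as [|a b]; simpl; intros H; [lia|].
        pose proof (leaves_pos a); pose proof (leaves_pos b).
        exists (leaves a). split; [apply in_seq; lia|].
        apply in_flat_map. exists a. split; [apply IH; lia|].
        apply in_map_iff. exists b. split; [reflexivity|]. apply IH; lia.
Qed.

Lemma Omega_spec n t : In t (Omega n) <-> leaves t = n.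
Proof. apply trees_aux_spec; lia. Qed.

Lemma NoDup_flat_map {A B : Type} (f : A -> list B) (l : list A) :
  (forall x y z, In x l -> In y l -> In z (f x) -> In z (f y) -> x = y) ->
  NoDup l -> (forall x, In x l -> NoDup (f x)) -> NoDup (flat_map f l).
Proof.
  induction l as [|x l IHl]; intros Hd Hl Hf; simpl; [constructor|].
  inversion Hl as [|? ? Hx Hl']; subst.
  apply NoDup_app.
  - apply Hf; now left.
  - apply IHl; [intros x0 y z Hx0 Hy; apply Hd; right; auto | exact Hl' | intros; apply Hf; right; auto].
  - intros z Hz Hz'. apply in_flat_map in Hz'. destruct Hz' as [y [Hy Hzy]].
    assert (x = y) by (eapply Hd; [left; reflexivity|right; exact Hy|exact Hz|exact Hzy]).
    subst; contradiction.
Qed.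

Lemma trees_aux_NoDup fuel : forall n, NoDup (trees_aux fuel n).
Proof.
  induction fuel as [|f IH]; intros n; simpl; [constructor|].
  destruct (Nat.eqb n 1); [repeat constructor; simpl; tauto|].
  apply NoDup_flat_map.
  - intros k1 k2 t Hk1 Hk2 H1 H2.
    apply in_flat_map in H1; destruct H1 as [a1 [Ha1 H1]].
    apply in_map_iff in H1; destruct H1 as [b1 [<- _]].
    apply in_flat_map in H2; destruct H2 as [a2 [Ha2 H2]].
    apply in_map_iff in H2; destruct H2 as [b2 [E _]].
    injection E as -> ->.
    (* a1 appears in trees_aux f k1 and trees_aux f k2: leaves determine k *)
    destruct f as [|f'].
    + destruct Ha1.
    + clear -Ha1 Ha2. revert Ha1 Ha2. generalize (S f') as g.
      intros g Ha1 Ha2.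
      assert (Hl : forall m t, In t (trees_aux g m) -> leaves t = m).
      { clear. induction g as [|g IHg]; intros m t H; simpl in H; [destruct H|].
        destruct (Nat.eqb_spec m 1) as [->|_]; [destruct H as [<-|[]]; reflexivity|].
        apply in_flat_map in H; destruct H as [k [Hk H]]. apply in_seq in Hk.
        apply in_flat_map in H; destruct H as [a [Ha H]].
        apply in_map_iff in H; destruct H as [b [<- Hb]].
        apply IHg in Ha; apply IHg in Hb; simpl; lia. }
      apply Hl in Ha1; apply Hl in Ha2; congruence.
  - apply seq_NoDup.
  - intros k _. apply NoDup_flat_map.
    + intros a1 a2 t _ _ H1 H2.
      apply in_map_iff in H1; destruct H1 as [b1 [<- _]].
      apply in_map_iff in H2; destruct H2 as [b2 [E _]].
      now injection E.
    + apply IH.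
    + intros a _. apply NoDup_map_NoDup_ForallPairs; [|apply IH]. intros x y _ _ E; now injection E.

Qed.

Lemma Omega_NoDup n : NoDup (Omega n).
Proof. apply trees_aux_NoDup. Qed.

(* Main.v *)
Require Import Defs.
From Stdlib Require Import Reals Lra Lia Arith List PeanoNat.
From Coquelicot Require Import Coquelicot.
Import ListNotations.
Open Scope R_scope.

Fixpoint sumL {A} (l : list A) (F : A -> R) : R :=
  match l with [] => 0 | x :: l' => F x + sumL l' F end.

Lemma sumL_app {A} (l1 l2 : list A) F : sumL (l1 ++ l2) F = sumL l1 F + sumL l2 F.
Proof. induction l1; simpl; [lra|rewrite IHl1; lra]. Qed.
Lemma sumL_map {A B} (f : A -> B) l F : sumL (map f l) F = sumL l (fun x => F (f x)).
Proof. induction l; simpl; [lra|rewrite IHl; lra]. Qed.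
Lemma sumL_flat_map {A B} (f : A -> list B) l F :
  sumL (flat_map f l) F = sumL l (fun x => sumL (f x) F).
Proof. induction l; simpl; [lra|rewrite sumL_app, IHl; lra]. Qed.
Lemma sumL_ext {A} (l : list A) F G : (forall x, In x l -> F x = G x) -> sumL l F = sumL l G.
Proof. induction l; simpl; intros H; [lra|]. rewrite H by auto. rewrite IHl; auto. Qed.
Lemma sumL_plus {A} (l : list A) F G : sumL l (fun x => F x + G x) = sumL l F + sumL l G.
Proof. induction l; simpl; [lra|rewrite IHl; lra]. Qed.
Lemma sumL_scal {A} (l : list A) c F : sumL l (fun x => c * F x) = c * sumL l F.
Proof. induction l; simpl; [lra|rewrite IHl; lra]. Qed.
Lemma sumL_swap {A B} (l1 : list A) (l2 : list B) F :
  sumL l1 (fun x => sumL l2 (fun y => F x y)) = sumL l2 (fun y => sumL l1 (fun x => F x y)).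
Proof.
  induction l1; simpl. { induction l2; simpl; [lra|rewrite <- IHl2; lra]. }
  rewrite IHl1. rewrite <- sumL_plus. reflexivity.
Qed.
Lemma sumL_fold {A} (l : list A) f : fold_right Rplus 0 (map f l) = sumL l f.
Proof. induction l; simpl; [lra|rewrite IHl; lra]. Qed.

Definition isch (a b : tree) : nat := match a, b with Leaf, Leaf => 1%nat | _, _ => 0%nat end.
Fixpoint cher (t : tree) : nat :=
  match t with Leaf => 0%nat | Node a b => (cher a + cher b + isch a b)%nat end.

Lemma hs_pos t : (1 <= hs t)%nat.
Proof. induction t; simpl; [lia|]. destruct (hs t1 =? hs t2); lia. Qed.
Lemma hs_node a b : (2 <= hs (Node a b))%nat.
Proof.
  simpl. pose proof (hs_pos a); pose proof (hs_pos b).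
  destruct (Nat.eqb_spec (hs a) (hs b)); lia.
Qed.
Lemma isch_hs a b : isch a b = b2n ((hs a =? 1) && (hs b =? 1)).
Proof.
  assert (HN : forall x y, (hs (Node x y) =? 1) = false).
  { intros x y; apply Nat.eqb_neq; pose proof (hs_node x y); lia. }
  destruct a as [|a1 a2], b as [|b1 b2]; try rewrite HN; try rewrite HN; reflexivity.
Qed.

Lemma S2_cher_aux t : (branch_tops 2 t + b2n (hs t =? 2) = cher t)%nat.
Proof.
  induction t as [|a IHa b IHb]; [reflexivity|].
  change (cher (Node a b)) with (cher a + cher b + isch a b)%nat.
  rewrite isch_hs, <- IHa, <- IHb.
  change (branch_tops 2 (Node a b)) with
    (branch_tops 2 a + branch_tops 2 b
       + b2n (Nat.eqb (hs a) 2 && negb (Nat.eqb (hs (Node a b)) 2))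
       + b2n (Nat.eqb (hs b) 2 && negb (Nat.eqb (hs (Node a b)) 2)))%nat.
  change (hs (Node a b)) with (if Nat.eqb (hs a) (hs b) then S (hs a) else Nat.max (hs a) (hs b)).
  pose proof (hs_pos a) as Hx; pose proof (hs_pos b) as Hy. revert Hx Hy.
  generalize (hs a) (hs b); intros x y Hx Hy.
  destruct (Nat.eqb_spec x y) as [<-|Hxy].
  all: repeat match goal with |- context [?x =? ?y] => destruct (Nat.eqb_spec x y) end;
  simpl; lia.
Qed.

Lemma S2_cher t : S2 t = cher t.
Proof. apply S2_cher_aux. Qed.

Lemma flat_map_ext_in {A B} (f g : A -> list B) l :
  (forall x, In x l -> f x = g x) -> flat_map f l = flat_map g l.
Proof. induction l; simpl; intros H; auto. rewrite H by auto. rewrite IHl; auto. Qed.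

Lemma trees_aux_S f : forall m, (m <= f)%nat -> trees_aux (S f) m = trees_aux f m.
Proof.
  induction f as [|f IH]; intros m Hm.
  - assert (m = 0%nat) by lia; subst. reflexivity.
  - change (trees_aux (S (S f)) m) with
      (if Nat.eqb m 1 then [Leaf]
       else flat_map (fun k =>
             flat_map (fun a => map (fun b => Node a b) (trees_aux (S f) (m - k)))
                      (trees_aux (S f) k)) (seq 1 (m - 1))).
    change (trees_aux (S f) m) with
      (if Nat.eqb m 1 then [Leaf]
       else flat_map (fun k =>
             flat_map (fun a => map (fun b => Node a b) (trees_aux f (m - k)))
                      (trees_aux f k)) (seq 1 (m - 1))).
    destruct (m =? 1); [reflexivity|].
    apply flat_map_ext_in. intros k Hk. apply in_seq in Hk.
    rewrite (IH k) by lia. rewrite (IH (m - k)%nat) by lia. reflexivity.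
Qed.

Lemma trees_aux_Omega d : forall m, trees_aux (m + d) m = Omega m.
Proof.
  induction d; intros m. { rewrite Nat.add_0_r; reflexivity. }
  rewrite Nat.add_succ_r, trees_aux_S by lia. apply IHd.
Qed.

Lemma trees_aux_Om f m : (m <= f)%nat -> trees_aux f m = Omega m.
Proof. intros H. replace f with (m + (f - m))%nat by lia. apply trees_aux_Omega. Qed.

Definition Phi n (F : tree -> R) := sumL (Omega n) F.

Lemma Omega_S n : (1 <= n)%nat -> Omega (S n) =
  flat_map (fun k => flat_map (fun a => map (fun b => Node a b) (Omega (S n - k))) (Omega k)) (seq 1 n).
Proof.
  intros Hn. unfold Omega at 1. simpl trees_aux.
  destruct n as [|n]; [lia|]. simpl (Nat.eqb _ 1). 
  replace (S (S n) - 1)%nat with (S n) by lia.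
  apply flat_map_ext_in. intros k Hk. apply in_seq in Hk.
  destruct k as [|k]; [lia|]. change (S (S n) - S k)%nat with (S n - k)%nat. rewrite (trees_aux_Om (S n) (S k)) by lia. rewrite (trees_aux_Om (S n) (S n - k)) by lia. reflexivity.
Qed.

Lemma Phi_S n F : (1 <= n)%nat -> Phi (S n) F =
  sumL (seq 1 n) (fun k => Phi k (fun a => Phi (S n - k) (fun b => F (Node a b)))).
Proof.
  intros Hn. unfold Phi. rewrite Omega_S by auto. rewrite sumL_flat_map.
  apply sumL_ext; intros k _. rewrite sumL_flat_map. apply sumL_ext; intros a _.
  rewrite sumL_map. reflexivity.
Qed.

Lemma Omega_1 : Omega 1 = [Leaf]. Proof. reflexivity. Qed.
Lemma Omega_0 : Omega 0 = []. Proof. reflexivity. Qed.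
Lemma Omega_2 : Omega 2 = [Node Leaf Leaf]. Proof. reflexivity. Qed.
Lemma Phi_1 F : Phi 1 F = F Leaf. Proof. unfold Phi; simpl; lra. Qed.

Lemma Phi_plus n F G : Phi n (fun x => F x + G x) = Phi n F + Phi n G.
Proof. apply sumL_plus. Qed.
Lemma Phi_ext n F G : (forall t, leaves t = n -> F t = G t) -> Phi n F = Phi n G.
Proof. intros H; apply sumL_ext; intros t Ht; apply H, Omega_spec, Ht. Qed.

Fixpoint ins (t : tree) : list tree :=
  match t with
  | Leaf => [Node Leaf Leaf; Node Leaf Leaf]
  | Node a b => Node (Node a b) Leaf :: Node Leaf (Node a b) ::
                map (fun a' => Node a' b) (ins a) ++ map (fun b' => Node a b') (ins b)
  end.

Lemma sumL_ins_node a b F : sumL (ins (Node a b)) F =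
  F (Node (Node a b) Leaf) + F (Node Leaf (Node a b))
  + sumL (ins a) (fun a' => F (Node a' b)) + sumL (ins b) (fun b' => F (Node a b')).
Proof. simpl. rewrite sumL_app, !sumL_map. lra. Qed.

Lemma sumL_seq_S_l s m F : sumL (seq s (S m)) F = F s + sumL (seq (S s) m) F.
Proof. reflexivity. Qed.
Lemma sumL_seq_S_r s m F : sumL (seq s (S m)) F = sumL (seq s m) F + F (s + m)%nat.
Proof. rewrite seq_S, sumL_app. simpl. lra. Qed.
Lemma sumL_seq_shift s m F : sumL (seq (S s) m) F = sumL (seq s m) (fun k => F (S k)).
Proof. rewrite <- seq_shift, sumL_map. reflexivity. Qed.

Lemma remy : forall n, (1 <= n)%nat -> forall F,
  Phi n (fun t => sumL (ins t) F) = INR (S n) * Phi (S n) F.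
Proof.
  intros n. induction n as [n IH] using lt_wf_ind. intros Hn F.
  destruct n as [|m]; [lia|].
  destruct (Nat.eq_dec m 0) as [->|Hm].
  { unfold Phi. rewrite Omega_1, Omega_2. simpl. lra. }
  rewrite (Phi_S m) by lia. rewrite (Phi_S (S m) F) by lia.
  erewrite sumL_ext.
  2:{ intros k _. apply sumL_ext. intros a _. apply sumL_ext. intros b _.
      apply sumL_ins_node. }
  set (G := fun k => Phi k (fun a => Phi (S (S m) - k) (fun b => F (Node a b)))).
  rewrite <- sumL_scal.
  rewrite (sumL_ext (seq 1 (S m)) _ (fun k => INR k * G k + INR (S (S m) - k) * G k)).
  2:{ intros k Hk. apply in_seq in Hk. unfold G.
      assert (E1 : INR (S (S m)) = INR k + INR (S (S m) - k)).
      { rewrite <- plus_INR. f_equal. lia. }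
      rewrite E1. lra. }
  rewrite sumL_plus.
  rewrite (sumL_seq_S_l 1 m), (sumL_seq_shift 1 m), (sumL_seq_S_r 1 m).
  set (A1 := sumL (seq 1 m) (fun k => Phi k (fun a => Phi (S m - k) (fun b => F (Node (Node a b) Leaf))))).
  set (A2 := sumL (seq 1 m) (fun k => Phi k (fun a => Phi (S m - k) (fun b => F (Node Leaf (Node a b)))))).
  set (A3 := sumL (seq 1 m) (fun k => Phi k (fun a => Phi (S m - k) (fun b => sumL (ins a) (fun a' => F (Node a' b)))))).
  set (A4 := sumL (seq 1 m) (fun k => Phi k (fun a => Phi (S m - k) (fun b => sumL (ins b) (fun b' => F (Node a b')))))).
  assert (HL : sumL (seq 1 m) (fun k => Phi k (fun a => Phi (S m - k) (fun b =>
       F (Node (Node a b) Leaf) + F (Node Leaf (Node a b)) +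
           sumL (ins a) (fun a' : tree => F (Node a' b)) +
           sumL (ins b) (fun b' : tree => F (Node a b'))))) = A1 + A2 + A3 + A4).
  { unfold A1, A2, A3, A4, Phi. rewrite <- !sumL_plus. apply sumL_ext; intros k _.
    rewrite <- !sumL_plus. apply sumL_ext; intros a _.
    rewrite <- !sumL_plus. apply sumL_ext; intros b _. lra. }
  etransitivity; [exact HL|]. clear HL.
  assert (H1 : A1 = INR (S (S m) - (1 + m)) * G (1 + m)%nat).
  { unfold A1, G. replace (S (S m) - (1 + m))%nat with 1%nat by lia.
    rewrite <- (Phi_S m (fun t => F (Node t Leaf))) by lia.
    simpl (1 + m)%nat. rewrite Rmult_1_l. apply Phi_ext. intros t _. rewrite Phi_1. reflexivity. }
  assert (H2 : A2 = INR 1 * G 1%nat).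
  { unfold A2, G. rewrite <- (Phi_S m (fun t => F (Node Leaf t))) by lia.
    rewrite Rmult_1_l, Phi_1. simpl (S (S m) - 1)%nat. reflexivity. }
  assert (H3 : A3 = sumL (seq 1 m) (fun k => INR (S k) * G (S k))).
  { unfold A3, G. apply sumL_ext. intros k Hk. apply in_seq in Hk.
    simpl (S (S m) - S k)%nat. rewrite <- IH by lia. unfold Phi.
    apply sumL_ext. intros a _. apply sumL_swap. }
  assert (H4 : A4 = sumL (seq 1 m) (fun k => INR (S (S m) - k) * G k)).
  { unfold A4, G. apply sumL_ext. intros k Hk. apply in_seq in Hk.
    replace (S (S m) - k)%nat with (S (S m - k)) by lia.
    transitivity (Phi k (fun a => INR (S (S m - k)) * Phi (S (S m - k)) (fun b => F (Node a b)))).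
    - apply Phi_ext; intros a _; rewrite <- IH by lia; reflexivity.
    - unfold Phi; rewrite sumL_scal; reflexivity. }
  rewrite H1, H2, H3, H4. lra.
Qed.

Lemma ins_isch t u b : In u (ins t) -> isch u b = 0%nat.
Proof.
  destruct t; simpl; intros H.
  - destruct H as [<-|[<-|[]]]; reflexivity.
  - destruct H as [<-|[<-|H]]; try reflexivity.
    apply in_app_or in H. destruct H as [H|H]; apply in_map_iff in H;
    destruct H as [x [<- _]]; reflexivity.
Qed.

Lemma ins_isch2 t u a : In u (ins t) -> isch a u = 0%nat.
Proof.
  destruct t; simpl; intros H.
  - destruct H as [<-|[<-|[]]]; destruct a; reflexivity.
  - destruct H as [<-|[<-|H]]; try (destruct a; reflexivity).
    apply in_app_or in H. destruct H as [H|H]; apply in_map_iff in H;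
    destruct H as [x [<- _]]; destruct a; reflexivity.
Qed.

Lemma isch_cases a b : isch a b = 0%nat \/ (a = Leaf /\ b = Leaf).
Proof. destruct a, b; simpl; auto. Qed.

Lemma ins_cher t : forall f : nat -> R,
  sumL (ins t) (fun u => f (cher u)) =
  2 * (INR (leaves t) - 2 * INR (cher t)) * f (S (cher t))
  + 2 * (INR (leaves t) + 2 * INR (cher t) - 1) * f (cher t).
Proof.
  induction t as [|a IHa b IHb]; intros f.
  - simpl. lra.
  - rewrite sumL_ins_node.
    rewrite (sumL_ext (ins a) _ (fun a' => (fun m => f (m + cher b)%nat) (cher a'))).
    2:{ intros u Hu. simpl. rewrite (ins_isch a u b Hu). f_equal; lia. }
    rewrite (sumL_ext (ins b) _ (fun b' => (fun m => f (cher a + m)%nat) (cher b'))).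
    2:{ intros u Hu. simpl. rewrite (ins_isch2 b u a Hu). f_equal; lia. }
    rewrite (IHa (fun m => f (m + cher b)%nat)), (IHb (fun m => f (cher a + m)%nat)).
    destruct (isch_cases a b) as [Hi|[-> ->]].
    + change (cher (Node a b)) with (cher a + cher b + isch a b)%nat.
      change (leaves (Node a b)) with (leaves a + leaves b)%nat.
      change (cher (Node (Node a b) Leaf)) with (cher a + cher b + isch a b + 0 + 0)%nat.
      change (cher (Node Leaf (Node a b))) with (0 + (cher a + cher b + isch a b) + 0)%nat.
      rewrite Hi. rewrite !plus_INR.
      replace (0 + (cher a + cher b + 0) + 0)%nat with (cher a + cher b)%nat by lia.
      replace (cher a + cher b + 0 + 0 + 0)%nat with (cher a + cher b)%nat by lia.
      replace (cher a + cher b + 0)%nat with (cher a + cher b)%nat by lia.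
      replace (S (cher a) + cher b)%nat with (S (cher a + cher b)) by lia.
      replace (cher a + S (cher b))%nat with (S (cher a + cher b)) by lia.
      simpl (INR 0). lra.
    + simpl. lra.
Qed.

Definition Hs (n : nat) (g : nat -> R) (c : nat) : R :=
  4 * INR c * (INR c - 1) * g (c - 1)%nat - (INR n - 2 * INR c) * (INR n - 2 * INR c - 1) * g c.

Lemma stein : forall n g, Phi n (fun t => Hs n g (cher t)) = 0.
Proof.
  induction n as [|m IH]; intros g.
  - reflexivity.
  - destruct (Nat.eq_dec m 0) as [->|Hm].
    + unfold Phi, Hs. rewrite Omega_1. simpl. lra.
    + pose proof (remy m ltac:(lia) (fun t => Hs (S m) g (cher t))) as R.
      set (g' := fun c => 2 * (INR m + 2 * INR c + 1) * g c + 2 * (INR m - 2 * INR c - 2) * g (S c)).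
      assert (E : Phi m (fun t => sumL (ins t) (fun t0 => Hs (S m) g (cher t0)))
                  = Phi m (fun t => Hs m g' (cher t))).
      { apply Phi_ext. intros t Ht. rewrite (ins_cher t (fun c => Hs (S m) g c)). rewrite Ht.
        unfold Hs, g'. destruct (cher t) as [|c].
        - rewrite !S_INR. simpl (INR 0). simpl (1 - 1)%nat. simpl (0 - 1)%nat. ring.
        - simpl (S c - 1)%nat. simpl (S (S c) - 1)%nat. rewrite Nat.sub_0_r. rewrite !S_INR. ring. }
      rewrite E, IH in R.
      assert (INR (S m) <> 0) by (apply not_0_INR; lia).
      symmetry in R. apply Rmult_integral in R. destruct R as [R|R]; [congruence|]. exact R.
Qed.

Fixpoint sm (f : nat -> R) (m : nat) : R :=
  match m with O => 0 | S m' => sm f m' + f m' end.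

Lemma sm_sum_f f k : sm f (S k) = sum_f_R0 f k.
Proof. induction k; simpl in *; [lra|]. rewrite IHk. reflexivity. Qed.
Lemma sm_ext f g m : (forall i, (i < m)%nat -> f i = g i) -> sm f m = sm g m.
Proof. induction m; simpl; intros H; [lra|]. rewrite IHm, H; auto. Qed.
Lemma sm_plus f g m : sm (fun i => f i + g i) m = sm f m + sm g m.
Proof. induction m; simpl; [lra|]. rewrite IHm; lra. Qed.
Lemma sm_scal c f m : sm (fun i => c * f i) m = c * sm f m.
Proof. induction m; simpl; [lra|]. rewrite IHm; lra. Qed.
Lemma sm_zero f m : (forall i, (i < m)%nat -> f i = 0) -> sm f m = 0.
Proof. induction m; simpl; intros H; [lra|]. rewrite IHm, H; auto. lra. Qed.

Lemma binom1 x k : (x + 1) ^ k = sm (fun i => Binomial.C k i * x ^ i) (S k).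
Proof.
  rewrite binomial, sm_sum_f. apply sum_eq. intros i _. rewrite pow1. ring.
Qed.

Lemma C_n_n k : Binomial.C k k = 1.
Proof.
  unfold Binomial.C. rewrite Nat.sub_diag. simpl (fact 0). simpl (INR 1).
  pose proof (INR_fact_neq_0 k). field. auto.
Qed.

Lemma C_Sn_n k : Binomial.C (S k) k = INR (S k).
Proof.
  unfold Binomial.C. replace (S k - k)%nat with 1%nat by lia.
  change (fact (S k)) with (S k * fact k)%nat. rewrite mult_INR. simpl (fact 1).
  pose proof (INR_fact_neq_0 k). simpl (INR 1). field. auto.
Qed.

Lemma C_SSn_n k : Binomial.C (S (S k)) k = INR (S (S k)) * INR (S k) / 2.
Proof.
  unfold Binomial.C. replace (S (S k) - k)%nat with 2%nat by lia.
  change (fact (S (S k))) with (S (S k) * (S k * fact k))%nat. rewrite !mult_INR. simpl (fact 2).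
  pose proof (INR_fact_neq_0 k). simpl (INR 2). field. auto.
Qed.

Definition E n (f : tree -> R) := Phi n f / INR (length (Omega n)).
Lemma expect_E n f : expect n f = E n f.
Proof. unfold expect, E, Phi. rewrite sumL_fold. reflexivity. Qed.
Lemma E_plus n f g : E n (fun t => f t + g t) = E n f + E n g.
Proof. unfold E. rewrite Phi_plus. unfold Rdiv. ring. Qed.
Lemma E_scal n c f : E n (fun t => c * f t) = c * E n f.
Proof. unfold E, Phi. rewrite sumL_scal. unfold Rdiv. ring. Qed.
Lemma E_ext n f g : (forall t, leaves t = n -> f t = g t) -> E n f = E n g.
Proof. intros H. unfold E. rewrite (Phi_ext n f g H). reflexivity. Qed.
Lemma E_sm n F m : E n (fun t => sm (fun i => F i t) m) = sm (fun i => E n (F i)) m.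
Proof.
  induction m; simpl.
  - unfold E, Phi. rewrite (sumL_ext _ _ (fun t => 0 * 0)) by (intros; lra).
    rewrite sumL_scal. unfold Rdiv. ring.
  - rewrite E_plus, IHm. reflexivity.
Qed.
Lemma E_minus n f g : E n (fun t => f t - g t) = E n f - E n g.
Proof.
  unfold Rminus. rewrite E_plus. f_equal.
  rewrite (E_ext n _ (fun t => (-1) * g t)) by (intros; ring). rewrite E_scal. ring.
Qed.

Definition Xv n t := INR (cher t) - INR n / 4.
Definition em n j := E n (fun t => Xv n t ^ j).

Lemma stein_X n k :
  let a := INR n / 4 in
  4 * (a * a - a) * em n k + 4 * (2 * a - 1) * em n (S k) + 4 * em n (S (S k))
  - sm (fun i => Binomial.C k i * ((4 * a * a - 2 * a) * em n i - (8 * a - 2) * em n (S i)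
                                   + 4 * em n (S (S i)))) (S k) = 0.
Proof.
  intros a.
  pose proof (stein n (fun c => (INR c - a + 1) ^ k)) as HS.
  assert (HE : E n (fun t => Hs n (fun c => (INR c - a + 1) ^ k) (cher t)) = 0).
  { unfold E. rewrite HS. unfold Rdiv. ring. }
  rewrite (E_ext n _ (fun t =>
     4 * (a * a - a) * Xv n t ^ k + 4 * (2 * a - 1) * Xv n t ^ (S k) + 4 * Xv n t ^ (S (S k))
     - sm (fun i => Binomial.C k i * ((4 * a * a - 2 * a) * Xv n t ^ i - (8 * a - 2) * Xv n t ^ (S i)
                                   + 4 * Xv n t ^ (S (S i)))) (S k))) in HE.
  2:{ intros t _. unfold Hs, Xv. fold a.
      set (X := INR (cher t) - a).
      rewrite (sm_ext _ (fun i => ((4 * a * a - 2 * a) - (8*a-2) * X + 4 * X^2) * (Binomial.C k i * X ^ i)) (S k)).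
      2:{ intros i _. simpl. ring. }
      rewrite sm_scal, <- binom1.
      assert (E2 : 4 * INR (cher t) * (INR (cher t) - 1) * (INR (cher t - 1) - a + 1) ^ k
                   = 4 * INR (cher t) * (INR (cher t) - 1) * X ^ k).
      { unfold X. destruct (cher t) as [|c]. { simpl. ring. }
        simpl (S c - 1)%nat. rewrite Nat.sub_0_r, S_INR. f_equal. f_equal. ring. }
      rewrite E2. replace (INR (cher t)) with (X + a) by (unfold X; ring).
      replace (INR n) with (4 * a) by (unfold a; field). simpl. ring. }
  rewrite E_minus, !E_plus, !E_scal, E_sm in HE.
  rewrite <- HE. f_equal. apply sm_ext. intros i _.
  rewrite E_scal, E_plus, E_minus, !E_scal. reflexivity.
Qed.

Lemma rec_em n k :
  let a := INR n / 4 in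
  (4 * INR n - 6 - 4 * INR k) * em n (S k) =
  (2 * a - (8 * a - 2) * INR k) * em n k
  + (4 * a * a - 2 * a) * sm (fun i => Binomial.C k i * em n i) k
  - (8 * a - 2) * sm (fun i => Binomial.C k i * em n (S i)) (k - 1)
  + 4 * sm (fun i => Binomial.C k i * em n (S (S i))) (k - 1).
Proof.
  intros a. pose proof (stein_X n k) as H. cbv zeta in H. fold a in H.
  rewrite (sm_ext _ (fun i => (4 * a * a - 2 * a) * (Binomial.C k i * em n i)
     + (- (8 * a - 2)) * (Binomial.C k i * em n (S i)) + 4 * (Binomial.C k i * em n (S (S i)))))
    in H by (intros; ring).
  rewrite !sm_plus, !sm_scal in H.
  apply Rminus_diag_uniq. rewrite <- H.
  destruct k as [|k].
  - simpl (0 - 1)%nat. cbn [sm] in *. rewrite C_n_n. simpl (INR 0). unfold a. field.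
  - cbn [sm]. replace (S k - 1)%nat with k by lia. rewrite C_n_n, C_Sn_n.
    unfold a. field.
Qed.

Lemma d2 n : (2 * Nat.div2 n <= n <= 2 * Nat.div2 n + 1)%nat.
Proof. pose proof (Nat.div2_odd n). destruct (Nat.odd n); simpl in *; lia. Qed.

Lemma lim_invn : is_lim_seq (fun n => / INR n) 0.
Proof.
  pose proof (is_lim_seq_inv _ _ is_lim_seq_INR) as H. simpl in H.
  apply H. discriminate.
Qed.

Definition ifz (p : nat) (x : R) : R := if (p =? 0)%nat then x else 0.

Lemma lim_invpow p : is_lim_seq (fun n => (/ INR n) ^ p) (ifz p 1).
Proof.
  induction p.
  - simpl. apply is_lim_seq_const.
  - simpl. unfold ifz; simpl. replace 0 with (0 * ifz p 1) by ring.
    apply is_lim_seq_mult'; [apply lim_invn|exact IHp].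
Qed.

Lemma lim_term (c : nat -> R) (A : R) (u : nat -> R) (B : R) p : is_lim_seq c A -> is_lim_seq u B ->
  is_lim_seq (fun n => c n * (/ INR n) ^ p * u n) (ifz p (A * B)).
Proof.
  intros Hc Hu.
  replace (ifz p (A * B)) with (A * ifz p 1 * B)
    by (unfold ifz; destruct (p =? 0)%nat; ring).
  apply is_lim_seq_mult'; [apply is_lim_seq_mult'; [exact Hc|apply lim_invpow]|exact Hu].
Qed.

Lemma lim_rat (f : nat -> R) (p1 p0 q1 q0 : R) N : q1 <> 0 ->
  (forall n, (N <= n)%nat -> f n = (p1 * INR n + p0) / (q1 * INR n + q0)) ->
  is_lim_seq f (p1 / q1).
Proof.
  intros Hq Hf.
  apply (is_lim_seq_ext_loc (fun n => (p1 + p0 * / INR n) / (q1 + q0 * / INR n))).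
  - exists (S N). intros n Hn. rewrite Hf by lia.
    assert (INR n <> 0) by (apply not_0_INR; lia).
    assert (q1 * INR n + q0 = (q1 + q0 * / INR n) * INR n) by (field; auto).
    assert (p1 * INR n + p0 = (p1 + p0 * / INR n) * INR n) by (field; auto).
    destruct (Req_dec (q1 + q0 * / INR n) 0) as [Z|Z].
    + rewrite H0, H1, Z. unfold Rdiv. rewrite Rmult_0_l, !Rinv_0. ring.
    + assert (q1 * INR n + q0 <> 0) by (rewrite H0; apply Rmult_integral_contrapositive_currified; assumption). field; tauto.
  - apply is_lim_seq_div'; [| |exact Hq].
    + assert (HH : is_lim_seq (fun n => p1 + p0 * / INR n) (p1 + p0 * 0)).
      { apply is_lim_seq_plus'; [apply is_lim_seq_const|].
        apply is_lim_seq_mult'; [apply is_lim_seq_const|apply lim_invn]. }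
      rewrite Rmult_0_r, Rplus_0_r in HH. exact HH.
    + assert (HH : is_lim_seq (fun n => q1 + q0 * / INR n) (q1 + q0 * 0)).
      { apply is_lim_seq_plus'; [apply is_lim_seq_const|].
        apply is_lim_seq_mult'; [apply is_lim_seq_const|apply lim_invn]. }
      rewrite Rmult_0_r, Rplus_0_r in HH. exact HH.
Qed.

Lemma lim_sm (f : nat -> nat -> R) (l : nat -> R) m :
  (forall i, (i < m)%nat -> is_lim_seq (fun n => f i n) (l i)) ->
  is_lim_seq (fun n => sm (fun i => f i n) m) (sm l m).
Proof.
  induction m; intros H; simpl.
  - apply is_lim_seq_const.
  - apply is_lim_seq_plus'; [apply IHm; auto|apply H; lia].
Qed.

Lemma HP0 x y d r : x <> 0 -> (d <= r)%nat -> (/ x) ^ (r - d) * (y / x ^ d) = y / x ^ r.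
Proof.
  intros Hx Hdr. replace r with (d + (r - d))%nat at 2 by lia.
  generalize (r - d)%nat; intros e. rewrite pow_add, pow_inv.
  pose proof (pow_nonzero x d Hx); pose proof (pow_nonzero x e Hx). field; auto.
Qed.

Lemma HP1 x y d r : x <> 0 -> (d + 1 <= r)%nat -> (/ x) ^ (r - 1 - d) * (y / x ^ d) = x * y / x ^ r.
Proof.
  intros Hx Hdr. replace r with (d + (r - 1 - d) + 1)%nat at 2 by lia.
  generalize (r - 1 - d)%nat; intros e. rewrite !pow_add, pow_inv.
  pose proof (pow_nonzero x d Hx); pose proof (pow_nonzero x e Hx). simpl. field; auto.
Qed.

Fixpoint comb (k : nat) : tree := match k with O => Leaf | S k' => Node (comb k') Leaf end.
Lemma leaves_comb k : leaves (comb k) = S k.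
Proof. induction k; simpl; lia. Qed.

Lemma sumL_one {A} (l : list A) : sumL l (fun _ => 1) = INR (length l).
Proof. induction l; simpl; [reflexivity|]. rewrite IHl. destruct (length l); simpl; lra. Qed.

Lemma len_pos n : (1 <= n)%nat -> INR (length (Omega n)) <> 0.
Proof.
  intros Hn. apply not_0_INR.
  assert (H : In (comb (n - 1)) (Omega n)) by (apply Omega_spec; rewrite leaves_comb; lia).
  destruct (Omega n); simpl in *; [contradiction|lia].
Qed.

Lemma E_one n : (1 <= n)%nat -> E n (fun _ => 1) = 1.
Proof. intros Hn. unfold E, Phi. rewrite sumL_one. field. apply len_pos; auto. Qed.

Definition u j n := em n j / INR n ^ Nat.div2 j.
Definition Lm j := if Nat.even j then INR (dfact (j - 1)) / 16 ^ Nat.div2 j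
                   else INR (dfact j) / (8 * 16 ^ Nat.div2 j).

Definition LV k :=
  let r := Nat.div2 (S k) in
  ifz (r - Nat.div2 k) ((1/2 - 2 * INR k) / 4 * Lm k)
  + sm (fun i => Binomial.C k i * ifz (r - 1 - Nat.div2 i) (1/16 * Lm i)) k
  - sm (fun i => Binomial.C k i * ifz (r - Nat.div2 (S i)) (1/2 * Lm (S i))) (k - 1)
  + sm (fun i => Binomial.C k i * ifz (r - Nat.div2 (S (S i))) (0 * Lm (S (S i)))) (k - 1).

Lemma mom_step k : (forall y, (y < S k)%nat -> is_lim_seq (u y) (Lm y)) ->
  is_lim_seq (u (S k)) (LV k).
Proof.
  intros IH. unfold LV. set (r := Nat.div2 (S k)).
  set (D := fun n => 4 * INR n - 6 - 4 * INR k).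
  set (c0 := fun n => (2 * (INR n / 4) - (8 * (INR n / 4) - 2) * INR k) / D n).
  set (c1 := fun n => (4 * (INR n / 4) * (INR n / 4) - 2 * (INR n / 4)) / (D n * INR n)).
  set (c2 := fun n => (8 * (INR n / 4) - 2) / D n).
  set (c3 := fun n => 4 / D n).
  assert (HD : forall n, (S (S k) <= n)%nat -> D n > 0 /\ INR n > 0).
  { intros n Hn. apply le_INR in Hn. rewrite !S_INR in Hn. unfold D. pose proof (pos_INR k). lra. }
  apply (is_lim_seq_ext_loc (fun n =>
     c0 n * (/ INR n) ^ (r - Nat.div2 k) * u k n
     + sm (fun i => Binomial.C k i * (c1 n * (/ INR n) ^ (r - 1 - Nat.div2 i) * u i n)) k
     - sm (fun i => Binomial.C k i * (c2 n * (/ INR n) ^ (r - Nat.div2 (S i)) * u (S i) n)) (k - 1)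
     + sm (fun i => Binomial.C k i * (c3 n * (/ INR n) ^ (r - Nat.div2 (S (S i))) * u (S (S i)) n)) (k - 1))).
  - exists (S (S k)). intros n Hn. destruct (HD n Hn) as [HDn Hn0].
    assert (Hn0' : INR n <> 0) by lra.
    pose proof (rec_em n k) as R. cbv zeta in R.
    pose proof (d2 k) as Dk. pose proof (d2 (S k)) as DSk. fold r in DSk.
    unfold u.
    rewrite (sm_ext (fun i => Binomial.C k i * (c1 n * (/ INR n) ^ (r - 1 - Nat.div2 i) * (em n i / INR n ^ Nat.div2 i)))
                    (fun i => (c1 n * INR n / INR n ^ r) * (Binomial.C k i * em n i)) k).
    2:{ intros i Hi. pose proof (d2 i). rewrite (Rmult_assoc (c1 n)), HP1 by (auto; lia).
        unfold Rdiv. ring. }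
    rewrite (sm_ext (fun i => Binomial.C k i * (c2 n * (/ INR n) ^ (r - Nat.div2 (S i)) * (em n (S i) / INR n ^ Nat.div2 (S i))))
                    (fun i => (c2 n / INR n ^ r) * (Binomial.C k i * em n (S i))) (k - 1)).
    2:{ intros i Hi. pose proof (d2 (S i)). rewrite (Rmult_assoc (c2 n)), HP0 by (auto; lia).
        unfold Rdiv. ring. }
    rewrite (sm_ext (fun i => Binomial.C k i * (c3 n * (/ INR n) ^ (r - Nat.div2 (S (S i))) * (em n (S (S i)) / INR n ^ Nat.div2 (S (S i)))))
                    (fun i => (c3 n / INR n ^ r) * (Binomial.C k i * em n (S (S i)))) (k - 1)).
    2:{ intros i Hi. pose proof (d2 (S (S i))). rewrite (Rmult_assoc (c3 n)), HP0 by (auto; lia).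
        unfold Rdiv. ring. }
    rewrite !sm_scal.
    rewrite (Rmult_assoc (c0 n)), HP0 by (auto; lia).
    assert (Eem : em n (S k) = / D n * ((4 * INR n - 6 - 4 * INR k) * em n (S k)))
      by (unfold D in *; field; lra).
    rewrite Eem, R. pose proof (pow_nonzero (INR n) r Hn0').
    unfold c0, c1, c2, c3, D in *. fold r. field. repeat split; auto; lra.
  - assert (L0 : is_lim_seq c0 ((1/2 - 2 * INR k) / 4)).
    { apply (lim_rat _ _ (2 * INR k) _ (-6 - 4 * INR k) (S (S k))); [lra|].
      intros n Hn. unfold c0, D. f_equal; field. }
    assert (L1 : is_lim_seq c1 (1/16)).
    { replace (1/16) with ((1/4)/4) by field.
      apply (lim_rat _ _ (-1/2) _ (-6 - 4 * INR k) (S (S k))); [lra|].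
      intros n Hn. destruct (HD n Hn) as [H1 H2]. unfold c1, D in *. field. split; lra. }
    assert (L2 : is_lim_seq c2 (1/2)).
    { replace (1/2) with (2/4) by field.
      apply (lim_rat _ _ (-2) _ (-6 - 4 * INR k) (S (S k))); [lra|].
      intros n Hn. unfold c2, D. f_equal; field. }
    assert (L3 : is_lim_seq c3 0).
    { replace 0 with (0/4) by field.
      apply (lim_rat _ _ 4 _ (-6 - 4 * INR k) (S (S k))); [lra|].
      intros n Hn. unfold c3, D. f_equal; field. }
    apply is_lim_seq_plus'; [apply is_lim_seq_minus'; [apply is_lim_seq_plus'|]|].
    + apply lim_term; [exact L0|apply IH; lia].
    + apply lim_sm. intros i Hi. apply is_lim_seq_mult'; [apply is_lim_seq_const|].
      apply lim_term; [exact L1|apply IH; lia].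
    + apply lim_sm. intros i Hi. apply is_lim_seq_mult'; [apply is_lim_seq_const|].
      apply lim_term; [exact L2|apply IH; lia].
    + apply lim_sm. intros i Hi. apply is_lim_seq_mult'; [apply is_lim_seq_const|].
      apply lim_term; [exact L3|apply IH; lia].
Qed.

Lemma ifz_nz p x : (p <> 0)%nat -> ifz p x = 0.
Proof. intros H. unfold ifz. destruct (Nat.eqb_spec p 0); [lia|reflexivity]. Qed.
Lemma ifz_z p x : p = 0%nat -> ifz p x = x.
Proof. intros ->. reflexivity. Qed.
Lemma ifz_0 p x : ifz p (0 * x) = 0.
Proof. unfold ifz. destruct (p =? 0)%nat; ring. Qed.

Lemma dfact_odd s : dfact (S (2 * s)) = (S (2 * s) * dfact (2 * s - 1))%nat.
Proof.
  destruct s as [|s]; [reflexivity|].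
  replace (S (2 * S s)) with (S (S (S (2 * s)))) by lia.
  replace (2 * S s - 1)%nat with (S (2 * s)) by lia. reflexivity.
Qed.

Lemma Lm_e j s : j = (2 * s)%nat -> Lm j = INR (dfact (2 * s - 1)) / 16 ^ s.
Proof.
  intros ->. unfold Lm. rewrite Nat.even_mul. simpl (Nat.even 2). simpl orb.
  rewrite Nat.div2_double. reflexivity.
Qed.
Lemma Lm_o j s : j = S (2 * s) -> Lm j = INR (dfact (S (2 * s))) / (8 * 16 ^ s).
Proof.
  intros ->. unfold Lm. rewrite Nat.even_succ, Nat.odd_mul. simpl (Nat.odd 2). simpl andb.
  rewrite Nat.div2_succ_double. reflexivity.
Qed.

Lemma LV_eq k : LV k = Lm (S k).
Proof.
  unfold LV. cbv zeta.
  destruct (Nat.Even_or_Odd k) as [[s Hs]|[s Hs]]; subst k.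
  - rewrite Nat.div2_succ_double, Nat.div2_double.
    rewrite ifz_z by lia.
    rewrite (sm_zero (fun i => Binomial.C (2 * s) i * ifz (s - Nat.div2 (S i)) (1 / 2 * Lm (S i)))).
    2:{ intros i Hi. pose proof (d2 (S i)). rewrite ifz_nz by lia. ring. }
    rewrite (sm_zero (fun i => Binomial.C (2 * s) i * ifz (s - Nat.div2 (S (S i))) (0 * Lm (S (S i))))).
    2:{ intros i Hi. rewrite ifz_0. ring. }
    destruct s as [|s].
    + simpl. unfold Lm. simpl. lra.
    + replace (2 * S s)%nat with (S (S (2 * s))) by lia. cbn [sm].
      rewrite (sm_zero (fun i => Binomial.C (S (S (2 * s))) i * ifz (S s - 1 - Nat.div2 i) (1 / 16 * Lm i))).
      2:{ intros i Hi. pose proof (d2 i). rewrite ifz_nz by lia. ring. }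
      rewrite Nat.div2_double, Nat.div2_succ_double.
      rewrite !ifz_z by lia.
      rewrite C_SSn_n, C_Sn_n.
      rewrite (Lm_e (S (S (2 * s))) (S s)) by lia.
      rewrite (Lm_o (S (S (S (2 * s)))) (S s)) by lia.
      rewrite (Lm_e (2 * s) s) by lia.
      rewrite (Lm_o (S (2 * s)) s) by lia.
      rewrite (dfact_odd (S s)).
      replace (2 * S s - 1)%nat with (S (2 * s)) by lia.
      rewrite (dfact_odd s).
      rewrite !mult_INR, !S_INR, !mult_INR. simpl (INR 2).
      rewrite ?S_INR. simpl pow. field. apply pow_nonzero; lra.
  - replace (2 * s + 1)%nat with (S (2 * s)) by lia.
    change (Nat.div2 (S (S (2 * s)))) with (S (Nat.div2 (2 * s))). rewrite Nat.div2_double.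
    rewrite Nat.div2_succ_double.
    rewrite ifz_nz by lia.
    rewrite (sm_zero (fun i => Binomial.C (S (2 * s)) i * ifz (S s - Nat.div2 (S i)) (1 / 2 * Lm (S i)))).
    2:{ intros i Hi. pose proof (d2 (S i)). rewrite ifz_nz by lia. ring. }
    rewrite (sm_zero (fun i => Binomial.C (S (2 * s)) i * ifz (S s - Nat.div2 (S (S i))) (0 * Lm (S (S i))))).
    2:{ intros i Hi. rewrite ifz_0. ring. }
    cbn [sm].
    rewrite (sm_zero (fun i => Binomial.C (S (2 * s)) i * ifz (S s - 1 - Nat.div2 i) (1 / 16 * Lm i))).
    2:{ intros i Hi. pose proof (d2 i). rewrite ifz_nz by lia. ring. }
    rewrite Nat.div2_double. rewrite ifz_z by lia. rewrite C_Sn_n.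
    rewrite (Lm_e (S (S (2 * s))) (S s)) by lia.
    rewrite (Lm_e (2 * s) s) by lia.
    replace (2 * S s - 1)%nat with (S (2 * s)) by lia.
    rewrite (dfact_odd s). rewrite !mult_INR, !S_INR, !mult_INR. simpl (INR 2).
    rewrite ?S_INR. simpl pow. field. apply pow_nonzero; lra.
Qed.

Lemma mom j : is_lim_seq (u j) (Lm j).
Proof.
  induction j as [j IH] using lt_wf_ind.
  destruct j as [|k].
  - apply (is_lim_seq_ext_loc (fun _ => 1)).
    + exists 1%nat. intros n Hn. unfold u, em. simpl.
      rewrite E_one by auto. field.
    + unfold Lm. simpl. replace (1 / 1) with 1 by field. apply is_lim_seq_const.
  - rewrite <- LV_eq. apply mom_step. exact IH.
Qed.

Definition T l k n := E n (fun t => INR (cher t) ^ l * Xv n t ^ k).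
Definition V l k n := T l k n / INR n ^ (l + Nat.div2 k).
Fixpoint K l k := match l with
  | O => Lm k
  | S l' => 1/4 * K l' k + ifz (S (Nat.div2 k) - Nat.div2 (S k)) (1 * K l' (S k))
  end.

Lemma Vlim l : forall k, is_lim_seq (V l k) (K l k).
Proof.
  induction l as [|l IH]; intros k.
  - apply (is_lim_seq_ext (u k)); [|apply mom].
    intros n. unfold V, u, T, em. simpl (0 + Nat.div2 k)%nat. f_equal.
    apply E_ext. intros; simpl; ring.
  - simpl K. apply (is_lim_seq_ext_loc (fun n => 1/4 * V l k n + (fun _ => 1) n * (/ INR n) ^ (S (Nat.div2 k) - Nat.div2 (S k)) * V l (S k) n)).
    + exists 1%nat. intros n Hn. assert (Hn0 : INR n <> 0) by (apply not_0_INR; lia).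
      unfold V. pose proof (d2 k). pose proof (d2 (S k)).
      replace (S (Nat.div2 k) - Nat.div2 (S k))%nat with ((S l + Nat.div2 k) - (l + Nat.div2 (S k)))%nat by lia.
      rewrite Rmult_assoc, HP0 by (auto; lia).
      assert (ET : T (S l) k n = INR n / 4 * T l k n + T l (S k) n).
      { unfold T. rewrite <- E_scal, <- E_plus. apply E_ext. intros t _. unfold Xv. simpl. ring. }
      rewrite ET. simpl (S l + Nat.div2 k)%nat. simpl pow.
      pose proof (pow_nonzero (INR n) (l + Nat.div2 k) Hn0). field. auto.
    + apply is_lim_seq_plus'.
      * apply is_lim_seq_mult'; [apply is_lim_seq_const|apply IH].
      * apply lim_term; [apply is_lim_seq_const|apply IH].
Qed.

Lemma K_even l s : K l (2 * s) = (1/4) ^ l * Lm (2 * s).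
Proof.
  induction l; cbn [K]. { simpl pow; ring. }
  rewrite IHl, Nat.div2_succ_double, Nat.div2_double, ifz_nz by lia. simpl pow. ring.
Qed.

Lemma K_odd l s : K l (S (2 * s)) = (1/4) ^ l * Lm (S (2 * s)) + INR l * (1/4) ^ l * 4 * Lm (2 * S s).
Proof.
  induction l. { cbn [K]. simpl INR. simpl pow. ring. }
  cbn [K]. rewrite IHl. rewrite Nat.div2_succ_double.
  change (Nat.div2 (S (S (2 * s)))) with (S (Nat.div2 (2 * s))). rewrite Nat.div2_double.
  rewrite ifz_z by lia. replace (S (S (2 * s))) with (2 * S s)%nat by lia.
  rewrite K_even. rewrite S_INR. simpl pow. field.
Qed.

Lemma dfact_pos n : (0 < dfact n)%nat.
Proof.
  induction n as [n IH] using lt_wf_ind.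
  destruct n as [|[|m]]; simpl; try lia.
  specialize (IH m ltac:(lia)). lia.
Qed.

Lemma asymp_of (a b : nat -> R) l k :
  K l k <> 0 -> (forall n, (1 <= n)%nat -> a n / b n = V l k n / K l k) -> asymp a b.
Proof.
  intros HK Hab. unfold asymp. apply is_lim_seq_Reals.
  apply (is_lim_seq_ext_loc (fun n => V l k n / K l k)).
  - exists 1%nat. intros n Hn. symmetry. apply Hab. exact Hn.
  - replace 1 with (K l k / K l k) by (field; auto).
    apply is_lim_seq_div'; [apply Vlim|apply is_lim_seq_const|exact HK].
Qed.

Lemma expect_T n l k : expect n (fun t => INR (S2 t) ^ l * (INR (S2 t) - INR n / 4) ^ k) = T l k n.
Proof. rewrite expect_E. unfold T, Xv. apply E_ext. intros t _. rewrite S2_cher. reflexivity. Qed.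

Theorem lemma4 (s l : nat) :
  asymp (fun n => expect n (fun t => INR (S2 t) ^ l * (INR (S2 t) - INR n / 4) ^ (2 * s)))
        (fun n => (INR n / 4) ^ l * INR (dfact (2 * s - 1)) / 4 ^ (2 * s) * INR n ^ s)
  /\
  asymp (fun n => expect n (fun t => INR (S2 t) ^ l * (INR (S2 t) - INR n / 4) ^ (2 * s + 1)))
        (fun n => (INR n / 4) ^ l * INR (dfact (2 * s + 1)) / (2 * 4 ^ (2 * s + 1))
                  * INR (2 * l + 1) * INR n ^ s).
Proof.
  assert (P4 : forall m, (1/4) ^ m <> 0) by (intros; apply pow_nonzero; lra).
  assert (P16 : forall m, 16 ^ m <> 0) by (intros; apply pow_nonzero; lra).
  assert (E16 : 4 ^ (2 * s) = 16 ^ s) by (rewrite pow_mult; f_equal; simpl; ring).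
  split.
  - apply (asymp_of _ _ l (2 * s)).
    + rewrite K_even, (Lm_e _ s) by reflexivity.
      pose proof (dfact_pos (2 * s - 1)) as Hd. apply lt_INR in Hd. change (INR 0) with 0 in Hd.
      assert (0 < (1/4)^l) by (apply pow_lt; lra). assert (0 < 16^s) by (apply pow_lt; lra).
      apply Rgt_not_eq. apply Rmult_lt_0_compat; auto. apply Rdiv_lt_0_compat; auto.
    + intros n Hn. assert (Hn0 : INR n <> 0) by (apply not_0_INR; lia).
      rewrite expect_T. unfold V. rewrite K_even, (Lm_e _ s), Nat.div2_double by reflexivity.
      rewrite E16, pow_add.
      replace (INR n / 4) with (INR n * (1/4)) by field. rewrite Rpow_mult_distr.
      pose proof (dfact_pos (2 * s - 1)) as Hd. apply lt_INR in Hd. change (INR 0) with 0 in Hd.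
      pose proof (pow_nonzero (INR n) l Hn0). pose proof (pow_nonzero (INR n) s Hn0).
      field. repeat split; auto; lra.
  - apply (asymp_of _ _ l (S (2 * s))).
    + rewrite K_odd, (Lm_o _ s), (Lm_e _ (S s)) by reflexivity.
      pose proof (dfact_pos (S (2 * s))) as Hd. apply lt_INR in Hd. change (INR 0) with 0 in Hd.
      pose proof (dfact_pos (2 * S s - 1)) as Hd2. apply lt_INR in Hd2. change (INR 0) with 0 in Hd2.
      assert (0 < (1/4)^l) by (apply pow_lt; lra). assert (0 < 16^s) by (apply pow_lt; lra).
      assert (0 < 16^(S s)) by (apply pow_lt; lra). pose proof (pos_INR l).
      apply Rgt_not_eq. apply Rplus_lt_le_0_compat.
      * apply Rmult_lt_0_compat; auto. apply Rdiv_lt_0_compat; auto. lra.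
      * repeat apply Rmult_le_pos; try lra; apply Rlt_le, Rinv_0_lt_compat; auto.
    + intros n Hn. assert (Hn0 : INR n <> 0) by (apply not_0_INR; lia).
      replace (2 * s + 1)%nat with (S (2 * s)) by lia.
      rewrite expect_T. unfold V. rewrite K_odd, (Lm_o _ s), (Lm_e _ (S s)), Nat.div2_succ_double by reflexivity.
      replace (2 * S s - 1)%nat with (S (2 * s)) by lia.
      rewrite pow_add. change (4 ^ S (2 * s)) with (4 * 4 ^ (2 * s)). rewrite E16.
      replace (INR n / 4) with (INR n * (1/4)) by field. rewrite Rpow_mult_distr.
      pose proof (dfact_pos (S (2 * s))) as Hd. apply lt_INR in Hd. change (INR 0) with 0 in Hd.
      pose proof (pow_nonzero (INR n) l Hn0). pose proof (pow_nonzero (INR n) s Hn0).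
      rewrite plus_INR, mult_INR. simpl (INR 1). simpl (INR 2). simpl pow.
      pose proof (pos_INR l).
      field. repeat split; auto; try lra.
      assert (0 < (1/4)^l) by (apply pow_lt; lra).
      match goal with |- ?e <> 0 =>
        replace e with ((1/4)^l * INR (dfact (S (2 * s))) * (16 + 32 * INR l)) by ring end.
      apply Rgt_not_eq. apply Rmult_lt_0_compat; [apply Rmult_lt_0_compat; auto|lra].
Qed.
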